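(* Let $\mathbb{F}$ be a field with $\mathrm{char}(\mathbb{F})\neq 2$ and let $L$ be a finite-dimensional Lie algebra over $\mathbb{F}$. If $b(L)\leq 1$, then $L$ is solvable.
   Context: For $x\in L$, $b(x)=\mathrm{rank}(\mathrm{ad}_x)$ and the breadth of $L$ is $b(L)=\max\{b(x)\mid x\in L\}$. *)

(* Defs.v *)
From HB Require Import structures.
From mathcomp Require Import all_boot all_order all_algebra.
Set Implicit Arguments. Unset Strict Implicit. Unset Printing Implicit Defensive.
Import GRing.Theory.
Local Open Scope ring_scope.


Definition is_lie_bracket (F : fieldType) (V : vectType F) (br : V -> V -> V) : Prop :=
  [/\ (forall (a : F) (x y z : V), br (a *: x + y) z = a *: br x z + br y z),
      (forall (a : F) (x y z : V), br x (a *: y + z) = a *: br x y + br x z),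
      (forall x : V, br x x = 0) &
      (forall x y z : V, br x (br y z) + br y (br z x) + br z (br x y) = 0)].

Definition ad (F : fieldType) (V : vectType F) (br : V -> V -> V) (x : V) : 'End(V) :=
  linfun (br x).

Definition breadth_elt (F : fieldType) (V : vectType F) (br : V -> V -> V) (x : V) : nat :=
  \dim (limg (ad br x))%VS.

(* Derived subalgebra [U,U]: the span of all brackets [u,v] with u, v in U.
   By bilinearity of br this is the span of the brackets of basis vectors. *)
Definition derived_sub (F : fieldType) (V : vectType F) (br : V -> V -> V)
    (U : {vspace V}) : {vspace V} :=
  <<[seq br u v | u <- vbasis U, v <- vbasis U]>>%VS.

Fixpoint derived_series (F : fieldType) (V : vectType F) (br : V -> V -> V)
    (k : nat) : {vspace V} :=
  if k is k'.+1 then derived_sub br (derived_series br k') else fullv%VS.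

Definition lie_solvable (F : fieldType) (V : vectType F) (br : V -> V -> V) : Prop :=
  exists k : nat, derived_series br k = 0%VS.

(* Main.v *)
Require Import Defs.
From HB Require Import structures.
From mathcomp Require Import all_boot all_order all_algebra.
From Stdlib Require Import Classical.
Set Implicit Arguments. Unset Strict Implicit.
Import GRing.Theory.
Local Open Scope ring_scope.

Definition brl (F : fieldType) (V : vectType F) (br : V -> V -> V)
  (H : is_lie_bracket br) (x : V) : V -> V := br x.

Lemma brl_lin (F : fieldType) (V : vectType F) (br : V -> V -> V)
  (H : is_lie_bracket br) (x : V) : linear_for *:%R (@brl F V br H x).
Proof. move=> a u v; have := H; case=> _ H2 _ _; exact: H2. Qed.

HB.instance Definition _ (F : fieldType) (V : vectType F) (br : V -> V -> V)
  (H : is_lie_bracket br) (x : V) :=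
  GRing.isLinear.Build F V V *:%R (@brl F V br H x) (brl_lin H x).

Lemma adE (F : fieldType) (V : vectType F) (br : V -> V -> V)
  (H : is_lie_bracket br) (x y : V) : ad br x y = br x y.
Proof. exact: (lfunE (brl H x) y). Qed.

Lemma br0l (F : fieldType) (V : vectType F) (br : V -> V -> V)
  (H : is_lie_bracket br) (z : V) : br 0 z = 0.
Proof.
case: H => H1 _ _ _; have := H1 1 0 0 z.
rewrite !scale1r addr0 => /(congr1 (fun t => t - br 0 z)); rewrite subrr addrK => <- //.
Qed.

Lemma brDl (F : fieldType) (V : vectType F) (br : V -> V -> V)
  (H : is_lie_bracket br) (x y z : V) : br (x + y) z = br x z + br y z.
Proof. by case: H => H1 _ _ _; rewrite -{1}[x]scale1r H1 scale1r. Qed.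

Lemma brDr (F : fieldType) (V : vectType F) (br : V -> V -> V)
  (H : is_lie_bracket br) (x y z : V) : br z (x + y) = br z x + br z y.
Proof. by case: H => _ H1 _ _; rewrite -{1}[x]scale1r H1 scale1r. Qed.

Lemma brZl (F : fieldType) (V : vectType F) (br : V -> V -> V)
  (H : is_lie_bracket br) (a : F) (x z : V) : br (a *: x) z = a *: br x z.
Proof.
have := br0l H z; case: H => H1 _ _ _ h0.
by rewrite -[a *: x]addr0 H1 h0 addr0.
Qed.

Lemma brZr (F : fieldType) (V : vectType F) (br : V -> V -> V)
  (H : is_lie_bracket br) (a : F) (x z : V) : br z (a *: x) = a *: br z x.
Proof.
have h0 : br z 0 = 0.
  case: H => _ H1 _ _; have := H1 1 z 0 0.
  by rewrite !scale1r addr0 => /(congr1 (fun t => t - br z 0)); rewrite subrr addrK => <- //.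
by case: H => _ H1 _ _; rewrite -[a *: x]addr0 H1 h0 addr0.
Qed.

Lemma brN (F : fieldType) (V : vectType F) (br : V -> V -> V)
  (H : is_lie_bracket br) (x y : V) : br y x = - br x y.
Proof.
have := H => -[_ _ H3 _].
have := H3 (x + y); rewrite !(brDl H) !(brDr H) H3 H3 add0r addr0.
by move/eqP; rewrite addrC addr_eq0 => /eqP.
Qed.

Lemma line_img (F : fieldType) (V : vectType F) (br : V -> V -> V)
  (H : is_lie_bracket br) (Hb : forall x : V, (breadth_elt br x <= 1)%N)
  (x p r : V) : br x p != 0 -> br x r \in <[br x p]>%VS.
Proof.
move=> nz.
have hp : br x p \in limg (ad br x) by rewrite -(adE H x p); apply: memv_img; apply: memvf.
have hs : (<[br x p]> <= limg (ad br x))%VS by rewrite -memvE.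
have he : <[br x p]>%VS = limg (ad br x).
  apply/eqP; rewrite eqEdim hs /= dim_vline nz.
  exact: Hb.
by rewrite he -(adE H x r); apply: memv_img; apply: memvf.
Qed.

Lemma inter0 (F : fieldType) (V : vectType F) (u v p : V) (c : F) :
  u \notin <[v]>%VS -> p = c *: u -> p \in <[v]>%VS -> p = 0.
Proof.
move=> nu -> hp; have [->|cn] := eqVneq c 0; first by rewrite scale0r.
case/negP: nu; have -> : u = c^-1 *: (c *: u) by rewrite scalerA mulVf // scale1r.
exact: memvZ.
Qed.

Lemma all_line (F : fieldType) (V : vectType F) (br : V -> V -> V)
  (H : is_lie_bracket br) (Hb : forall x : V, (breadth_elt br x <= 1)%N)
  (x y a b : V) : br x y != 0 -> br a b \in <[br x y]>%VS.
Proof.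
move=> nv; set v := br x y; set u := br a b.
case: (boolP (u \in <[v]>%VS)) => // nu.
have nu0 : u != 0 by apply: contra nu => /eqP ->; exact: mem0v.
have h1 : br a y = 0.
  have /vlineP [c hc] := @line_img _ _ _ H Hb a b y nu0.
  apply: (inter0 nu hc).
  have /vlineP [d hd] : br y a \in <[br y x]>%VS.
    apply: line_img => //; by rewrite (brN H) oppr_eq0.
  rewrite (brN H) hd (brN H) -/v scalerN opprK; exact: memvZ (memv_line v).
have h2 : br x b = 0.
  have /vlineP [d hd] : br b x \in <[br b a]>%VS.
    apply: line_img => //; by rewrite (brN H) oppr_eq0.
  apply: (@inter0 _ _ u v _ d nu).
    by rewrite (brN H) hd (brN H) -/u scalerN opprK.
  exact: line_img.
have := @line_img _ _ _ H Hb (x + a) y b.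
rewrite !(brDl H) h1 h2 addr0 add0r -/u -/v => /(_ nv) hu.
by rewrite hu in nu.
Qed.

Theorem proposition2p4 (F : fieldType) (V : vectType F) (br : V -> V -> V) :
  (2 \notin [pchar F])%N ->
  is_lie_bracket br ->
  (forall x : V, (breadth_elt br x <= 1)%N) ->
  lie_solvable br.
Proof.
move=> _ H Hb.
case: (classic (exists x y, br x y != 0)) => [[x [y nv]]|none].
- exists 2%N; rewrite /= /derived_sub.
  have D1 : (<<[seq br u w | u <- vbasis (derived_series br 0),
                 w <- vbasis (derived_series br 0)]>> <= <[br x y]>)%VS.
    apply/span_subvP => z /allpairsP [[p q] [_ _ ->]] /=.
    exact: all_line.
  apply/eqP; rewrite -subv0; apply/span_subvP => z /allpairsP [[p q] [/= hp hq ->]] /=.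
  have /vlineP [c ->] := subvP D1 _ (vbasis_mem hp).
  have /vlineP [d ->] := subvP D1 _ (vbasis_mem hq).
  have := H => -[_ _ H3 _].
  by rewrite (brZl H) (brZr H) H3 !scaler0 memv0.
- exists 1%N; rewrite /= /derived_sub.
  apply/eqP; rewrite -subv0; apply/span_subvP => z /allpairsP [[p q] [_ _ ->]] /=.
  rewrite memv0; apply/negPn/negP => hn; apply: none; by exists p, q.
Qed.
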